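(* Let $\overrightarrow{W}$ be a Morse sequence on a simplicial complex $K$. Then there exists an arranged Morse sequence $\overrightarrow{V}$ on $K$ such that $\overrightarrow{W}$ and $\overrightarrow{V}$ are equivalent.
   Context: A simplicial complex $K$ is a finite collection of non-empty finite sets closed under taking non-empty subsets; $\dim\sigma=|\sigma|-1$. A pair $(\sigma,\tau)$ with $\sigma\subsetneq\tau$ is a free pair for $K$ if $\tau$ is the only simplex other than $\sigma$ containing $\sigma$; $K$ is then an elementary expansion of $K\setminus\{\sigma,\tau\}$. If $\nu$ is a facet (maximal simplex) of $K$, $K$ is an elementary filling of $K\setminus\{\nu\}$. A Morse sequence on $K$ is a sequence $\langle\emptyset=K_0,\dots,K_k=K\rangle$ with each $K_i$ an elementary expansion or filling of $K_{i-1}$. For each $i$, set $\kappa_i=\nu$ if $K_i=K_{i-1}\cup\{\nu\}$ is a filling ($\nu$ is then critical), and $\kappa_i=(\sigma,\tau)$ if $K_i=K_{i-1}\cup\{\sigma,\tau\}$ is an expansion with $\sigma\subset\tau$ ($(\sigma,\tau)$ is then a regular pair). The dimension of a critical simplex is its dimension; the dimension of a regular pair $(\sigma,\tau)$ is $\dim\tau$. The Morse sequence is arranged if for each $i\in[1,k-1]$: $\dim(\kappa_i)\le\dim(\kappa_{i+1})$, and $\dim(\kappa_i)<\dim(\kappa_{i+1})$ whenever $\kappa_i$ is a critical simplex and $\kappa_{i+1}$ is a regular pair. Two Morse sequences on $K$ are equivalent if they have the same set of regular pairs (gradient vector field). *)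

(* Defs.v *)
From mathcomp Require Import all_boot.
Set Implicit Arguments. Unset Strict Implicit. Unset Printing Implicit Defensive.

Section Morse.
Variable T : finType.

Definition is_complex (K : {set {set T}}) : Prop :=
  set0 \notin K /\
  forall s t : {set T}, t \in K -> s != set0 -> s \subset t -> s \in K.

Definition sdim (s : {set T}) : nat := #|s|.-1.

Definition free_pair (K : {set {set T}}) (sigma tau : {set T}) : Prop :=
  [/\ sigma \in K, tau \in K, sigma \proper tau &
      forall rho, rho \in K -> sigma \subset rho -> rho = sigma \/ rho = tau].

Definition facet (K : {set {set T}}) (nu : {set T}) : Prop :=
  nu \in K /\ forall rho, rho \in K -> nu \subset rho -> rho = nu.

Inductive step := Crit of {set T} | Reg of {set T} & {set T}.

Definition step_simplices (k : step) : {set {set T}} :=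
  match k with Crit nu => [set nu] | Reg s t => [set s; t] end.

Definition step_dim (k : step) : nat :=
  match k with Crit nu => sdim nu | Reg _ t => sdim t end.

Definition is_crit (k : step) : bool := if k is Crit _ then true else false.
Definition is_reg (k : step) : bool := if k is Reg _ _ then true else false.

Definition cx (w : seq step) : {set {set T}} :=
  \bigcup_(k <- w) step_simplices k.

Definition valid_step (Kprev : {set {set T}}) (k : step) : Prop :=
  let Ki := Kprev :|: step_simplices k in
  is_complex Ki /\
  match k with
  | Crit nu => facet Ki nu /\ Ki :\ nu = Kprev
  | Reg s t => free_pair Ki s t /\ Ki :\: [set s; t] = Kprev
  end.

(* w encodes the Morse sequence <K_0 = empty, ..., K_k = K> *)
Definition morse_seq (K : {set {set T}}) (w : seq step) : Prop :=
  (forall i, i < size w -> valid_step (cx (take i w)) (nth (Crit set0) w i))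
  /\ cx w = K.

Definition arranged (w : seq step) : Prop :=
  forall i, i.+1 < size w ->
    let k1 := nth (Crit set0) w i in
    let k2 := nth (Crit set0) w i.+1 in
    step_dim k1 <= step_dim k2 /\
    (is_crit k1 -> is_reg k2 -> step_dim k1 < step_dim k2).

Definition reg_pairs (w : seq step) : seq ({set T} * {set T}) :=
  pmap (fun k => if k is Reg s t then Some (s, t) else None) w.

(* same gradient vector field *)
Definition equivalent (w v : seq step) : Prop := reg_pairs w =i reg_pairs v.

End Morse.

(* Main.v *)
Require Import Defs.
From mathcomp Require Import all_boot.
From mathcomp Require Import zify.
From HB Require Import structures.
Set Implicit Arguments. Unset Strict Implicit. Unset Printing Implicit Defensive.

Definition step_eqb (T : finType) (a b : step T) : bool :=
  match a, b with
  | Crit x, Crit y => x == y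
  | Reg s t, Reg s' t' => (s == s') && (t == t')
  | _, _ => false
  end.

Lemma step_eqP (T : finType) : Equality.axiom (@step_eqb T).
Proof.
case=> [x|s t] [y|s' t'] /=; try by constructor.
- by apply: (iffP eqP) => [->|[]].
- by apply: (iffP andP) => [[/eqP -> /eqP ->]|[-> ->]].
Qed.

HB.instance Definition _ (T : finType) := hasDecEq.Build (step T) (@step_eqP T).

Definition top (T : finType) (k : step T) : {set T} :=
  match k with Crit nu => nu | Reg _ t => t end.

Definition wf (T : finType) (k : step T) : Prop :=
  match k with Crit _ => True | Reg s t => s \proper t end.

Definition vs (T : finType) (A : {set {set T}}) (k : step T) : Prop :=
  [/\ is_complex (A :|: step_simplices k),
      forall y, y \in step_simplices k -> y \notin A,
      forall rho y, rho \in A :|: step_simplices k -> y \in step_simplices k ->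
        y \subset rho -> rho \in step_simplices k
    & wf k].

Lemma vsP (T : finType) (A : {set {set T}}) (k : step T) :
  valid_step A k <-> vs A k.
Proof.
case: k => [nu|s t] /=; split.
- move=> [C [[nK fa] E]]; split => //.
  + move=> y; rewrite in_set1 => /eqP ->; rewrite -E in_setD1 eqxx.
    done.
  + move=> rho y rK; rewrite in_set1 => /eqP -> nr.
    by rewrite (fa rho rK nr) in_set1.
- move=> [C D U _]; split => //; split.
  + split; first by rewrite in_setU in_set1 eqxx orbT.
    move=> rho rK nr; have := U rho nu rK; rewrite in_set1 eqxx => /(_ isT nr).
    by rewrite in_set1 => /eqP.
  + apply/setP => z; rewrite in_setD1 in_setU in_set1.
    case: eqP => [->|_] /=; last by rewrite orbF.
    by apply/esym/negbTE/D; rewrite in_set1.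
- move=> [C [[sK tK st fr] E]]; split => //.
  + move=> y yS; rewrite -E in_setD yS. done.
  + move=> rho y rK; rewrite in_set2 => /orP [] /eqP -> yr.
    * by case: (fr rho rK yr) => ->; rewrite in_set2 eqxx ?orbT.
    * have sr : s \subset rho := subset_trans (proper_sub st) yr.
      by case: (fr rho rK sr) => ->; rewrite in_set2 eqxx ?orbT.
- move=> [C D U st]; split => //; split.
  + split => //.
    * by rewrite in_setU in_set2 eqxx orbT.
    * by rewrite in_setU in_set2 eqxx !orbT.
    * move=> rho rK sr; have := U rho s rK; rewrite in_set2 eqxx => /(_ isT sr).
      by rewrite in_set2 => /orP [] /eqP ->; [left|right].
  + apply/setP => z; rewrite in_setD in_setU.
    case zS: (z \in [set s; t]) => /=; last by rewrite orbF.
    by apply/esym/negbTE/D.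
Qed.

Lemma card_free (T : finType) (K : {set {set T}}) (s t : {set T}) :
  is_complex K -> t \in K -> s \proper t ->
  (forall rho, rho \in K -> s \subset rho -> rho = s \/ rho = t) ->
  #|t| <= #|s|.+1.
Proof.
move=> [K0 Kc] tK st fr.
rewrite leqNgt; apply/negP => lt.
have [_ [v vt vs]] := properP st.
have rt : v |: s \subset t by rewrite subUset sub1set vt (proper_sub st).
have r0 : v |: s != set0 by apply/set0Pn; exists v; rewrite setU11.
have rK := Kc _ _ tK r0 rt.
have vr : v \in v |: s by rewrite setU11.
case: (fr _ rK (subsetUr _ _)) => e.
- by rewrite e in vr; rewrite vr in vs.
- have := cardsU1 v s; rewrite e; case: (v \in s) => /=; lia.
Qed.

Definition key (T : finType) (k : step T) : nat := (step_dim k).*2 + is_crit k.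

Lemma top_in (T : finType) (k : step T) : top k \in step_simplices k.
Proof. by case: k => [nu|s t] /=; rewrite !inE eqxx ?orbT. Qed.

Lemma card_le_top (T : finType) A (k : step T) y :
  vs A k -> y \in step_simplices k -> #|y| <= #|top k|.
Proof.
case: k => [nu|s t] [_ _ _ W] /=; first by rewrite in_set1 => /eqP ->.
rewrite in_set2 => /orP [] /eqP -> //.
exact/ltnW/proper_card.
Qed.

Lemma top_gt0 (T : finType) A (k : step T) : vs A k -> 0 < #|top k|.
Proof.
move=> [[C0 _] _ _ _]; rewrite card_gt0; apply/negP => /eqP e.
by move: C0; rewrite -e in_setU top_in orbT.
Qed.

Lemma noX (T : finType) A (k1 k2 : step T) y x :
  vs A k1 -> vs (A :|: step_simplices k1) k2 -> key k2 < key k1 ->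
  y \in step_simplices k1 -> x \in step_simplices k2 -> y \subset x -> False.
Proof.
move=> H1 H2 hk yS xS yx.
have g1 := top_gt0 H1; have g2 := top_gt0 H2.
have hx2 := card_le_top H2 xS.
case: H1 => [C1 D1 U1 W1]; case: H2 => [C2 D2 U2 W2].
have xy : y != x.
  apply/eqP => e; have := D2 _ xS; by rewrite -e in_setU yS orbT.
have ltyx : #|y| < #|x| by apply: proper_card; rewrite properEneq xy yx.
clear C2 D2 U2 W2 xy yx xS.
have dE : forall k : step T, step_dim k = #|top k|.-1 by case.
move: hk; rewrite /key !dE -!muln2.
move: ltyx; move: g1 yS W1 C1 U1 D1; case: k1 => [nu|s t] /= g1.
- rewrite in_set1 => /eqP -> _ _ _ _ ? ?; lia.
- rewrite in_set2 => /orP [] /eqP -> st C1 U1 D1 ? ?; last lia.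
  have tK : t \in A :|: [set s; t] by rewrite in_setU in_set2 eqxx !orbT.
  have := @card_free _ _ s t C1 tK st.
  have fr : forall rho, rho \in A :|: [set s; t] -> s \subset rho -> rho = s \/ rho = t.
    move=> rho rK sr; have := U1 rho s rK; rewrite in_set2 eqxx => /(_ isT sr).
    by rewrite in_set2 => /orP [] /eqP ->; [left|right].
  move=> /(_ fr); lia.
Qed.

Lemma swap (T : finType) A (k1 k2 : step T) :
  vs A k1 -> vs (A :|: step_simplices k1) k2 -> key k2 < key k1 ->
  vs A k2 /\ vs (A :|: step_simplices k2) k1.
Proof.
move=> H1 H2 hk; have HX := noX H1 H2 hk.
case: H1 => [C1 D1 U1 W1]; case: H2 => [C2 D2 U2 W2].
have E : A :|: step_simplices k2 :|: step_simplices k1 =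
         A :|: step_simplices k1 :|: step_simplices k2.
  by rewrite -!setUA (setUC (step_simplices k2)).
have sub : A :|: step_simplices k2 \subset A :|: step_simplices k1 :|: step_simplices k2.
  by rewrite setUSS // subsetUl.
split.
- split => //.
  + split.
    * apply/negP => h; apply: (negP (proj1 C2)); exact: (subsetP sub _ h).
    * move=> y x xK y0 yx.
      have := proj2 C2 y x (subsetP sub _ xK) y0 yx.
      rewrite !in_setU => /orP [/orP [-> //|yS1] | ->]; last by rewrite orbT.
      exfalso; move: xK; rewrite in_setU => /orP [xA|xS2].
      - have := U1 x y; rewrite in_setU xA => /(_ isT yS1 yx) xS1.
        by have := D1 x xS1; rewrite xA.
      - exact: HX y x yS1 xS2 yx.
  + by move=> y yS; have := D2 y yS; rewrite in_setU negb_or => /andP [].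
  + move=> rho y rK yS yr; apply: (U2 rho y _ yS yr); exact: (subsetP sub _ rK).
- split => //.
  + by rewrite E.
  + move=> y yS; rewrite in_setU negb_or D1 //=; apply/negP => yS2.
    by have := D2 y yS2; rewrite in_setU yS orbT.
  + move=> rho y; rewrite E in_setU => /orP [rK | rS2] yS yr; first exact: (U1 rho y rK yS yr).
    exfalso; exact: HX y rho yS rS2 yr.
Qed.

Fixpoint msq (T : finType) (A : {set {set T}}) (w : seq (step T)) : Prop :=
  match w with
  | [::] => True
  | k :: w' => valid_step A k /\ msq (A :|: step_simplices k) w'
  end.

Lemma msqP (T : finType) (A : {set {set T}}) (w : seq (step T)) :
  msq A w <-> forall i, i < size w ->
     valid_step (A :|: cx (take i w)) (nth (Crit set0) w i).
Proof.
elim: w A => [|k w IH] A /=; first by split.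
split.
- move=> [vk hw] [|i] /= hi; first by rewrite /cx big_nil setU0.
  have := (proj1 (IH _) hw i hi).
  by rewrite /cx big_cons setUA.
- move=> h; split; first by have := h 0 isT; rewrite /cx big_nil setU0.
  apply/IH => i hi; have := h i.+1 hi.
  by rewrite /= /cx big_cons setUA.
Qed.

Definition kle (T : finType) (a b : step T) := key a <= key b.

Lemma kle_trans (T : finType) : transitive (@kle T).
Proof. move=> a b c; rewrite /kle; lia. Qed.

Lemma ins (T : finType) A (k : step T) v :
  valid_step A k -> msq (A :|: step_simplices k) v -> sorted (@kle T) v ->
  exists v', [/\ msq A v', sorted (@kle T) v' & perm_eq (k :: v) v'].
Proof.
elim: v A k => [|x v IH] A k vk hv sv.
  by exists [:: k]; split.
case: (leqP (key k) (key x)) => hkx.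
  by exists (k :: x :: v); split => //=; rewrite {1}/kle hkx.
case: hv => vx hv.
have [vx' vk'] := swap (proj1 (vsP _ _) vk) (proj1 (vsP _ _) vx) hkx.
have hv' : msq (A :|: step_simplices x :|: step_simplices k) v.
  by rewrite -setUA (setUC (step_simplices x)) setUA.
have [v'' [m s p]] := IH _ _ (proj2 (vsP _ _) vk') hv' (path_sorted sv).
exists (x :: v''); split.
- by split => //; apply/vsP.
- rewrite /= (path_sortedE (@kle_trans T)) s andbT.
  rewrite -(perm_all _ p) /= {1}/kle (ltnW hkx) /=.
  by move: sv; rewrite /= (path_sortedE (@kle_trans T)) => /andP [].
- have h : perm_eq (k :: x :: v) (x :: k :: v).
    by apply/permPl; exact: (perm_catCA [:: k] [:: x] v).
  by apply: perm_trans h _; rewrite perm_cons.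
Qed.

Lemma sortm (T : finType) A (w : seq (step T)) :
  msq A w -> exists v, [/\ msq A v, sorted (@kle T) v & perm_eq w v].
Proof.
elim: w A => [|k w IH] A /=; first by exists [::].
move=> [vk hw]; have [v [m s p]] := IH _ hw.
have [v' [m' s' p']] := ins vk m s.
exists v'; split => //.
by apply: perm_trans p'; rewrite perm_cons.
Qed.

Lemma sorted_arranged (T : finType) (v : seq (step T)) :
  sorted (@kle T) v -> arranged v.
Proof.
case: v => [|x p] //= sp i hi.
have := (pathP (Crit set0) sp) i hi.
rewrite /kle /key /=.
case: (nth (Crit set0) (x :: p) i) => [a|a b]; case: (nth (Crit set0) p i) => [c|c d] /=;
  split => //; lia.
Qed.

Theorem theorem5 (T : finType) (K : {set {set T}}) (W : seq (step T)) :
  is_complex K -> morse_seq K W ->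
  exists V : seq (step T), [/\ morse_seq K V, arranged V & equivalent W V].
Proof.
move=> HK [Hv Hcx].
have hm : msq set0 W by apply/msqP => i hi; rewrite set0U; exact: Hv.
have [v [m s p]] := sortm hm.
exists v; split.
- split.
  + move=> i hi; have := proj1 (msqP _ _) m i hi; by rewrite set0U.
  + rewrite -Hcx /cx; apply: perm_big; by rewrite perm_sym.
- exact: sorted_arranged.
- move=> x; rewrite /reg_pairs !mem_pmap; apply: perm_mem; exact: perm_map.
Qed.
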